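(* Suppose processes know neither $n$ nor any upper bound $D$ on the network causal diameter, i.e., the algorithm executed by a process depends only on its own identifier and not on $n$ or $D$. Then there is no deterministic algorithm that solves leader election in every run (for every number of processes $n\ge2$, every assignment of distinct identifiers, and every sequence of communication graphs satisfying Assumption 1 for some positive integer $D$).
   Context: Model: a finite set $\Pi$ of $n\ge2$ processes with distinct identifiers runs a deterministic algorithm in synchronous lock-step rounds $r=1,2,\dots$. An adversary fixes an infinite sequence of simple directed graphs $\mathcal{G}^1,\mathcal{G}^2,\dots$ on vertex set $\Pi$; $(p\to q)\in\mathcal{G}^r$ iff $q$ receives $p$'s round-$r$ message in round $r$. In round $r$ each process broadcasts a message determined by its current state (received exactly by its out-neighbours in $\mathcal{G}^r$), then computes its new state from its current state and the set of (sender, message) pairs received in round $r$. Leader election: eventually exactly one process irrevocably enters a special state ELECTED and every other process irrevocably enters the state NON-ELECTED (non-leaders need not know the leader's identifier). Causality: $p$ causally influences $q$ in round $t$ if $q=p$ or $(p\to q)\in\mathcal{G}^t$; a causal chain of length $k\ge1$ from $p$ in round $t$ to $q$ is a sequence $p=p_0,\dots,p_k=q$ with $p_i$ causally influencing $p_{i+1}$ in round $t+i$; $d_t(p,q)$ is the least such $k$ ($\infty$ if none). A root component of $\mathcal{G}^t$ is a strongly connected component $\mathcal{R}$ with no edge $(q\to p)$, $p\in\mathcal{R}$, $q\notin\mathcal{R}$. For an interval $I=[r,s]$, an $I$-vertex-stable root component is a set $\mathcal{R}\subseteq\Pi$ that is a root component of $\mathcal{G}^t$ for every $t\in I$. When each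 $\mathcal{G}^x$ has a unique root component $\mathcal{R}^x$, $D^x=\max\{d_x(p,q):p\in\mathcal{R}^x,q\in\Pi\}$ is the network causal diameter of round $x$, and for $I=[r,s]$, $D^I=\max\{D^x:x\in I,\ x+D^x-1\le s\}$ ($\infty$ if empty). An $I$-vertex-stable root component with $I=[r,s]$ is $D$-bounded if $D\ge D^I$ and $D^{s-D+1}\le D$. Assumption 1 (parameter $D$): every $\mathcal{G}^r$ has exactly one root component; every $I$-vertex-stable root component with $|I|\ge D$ is $D$-bounded; and there is an interval $J=[r_{ST},r_{ST}+d]$ with $d>4D$ such that there is a $D$-bounded $J$-vertex-stable root component. *)

(* Defs.v *)
From Stdlib Require Import ClassicalEpsilon.
From mathcomp Require Import all_boot.
Set Implicit Arguments. Unset Strict Implicit. Unset Printing Implicit Defensive.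

(* ---------- Algorithms ----------------------------------------------------
   A deterministic algorithm whose code depends only on the process's own
   identifier (a nat), never on n or D.  Received messages in a round are the
   set of (sender identifier, message) pairs, represented as a partial map
   from sender identifiers to messages (senders have distinct identifiers).
   out id s = Some true  : state s is ELECTED
   out id s = Some false : state s is NON-ELECTED
   out id s = None       : undecided. *)
Record algorithm := Algorithm {
  St : Type;
  Msg : Type;
  init : nat -> St;
  send : nat -> St -> Msg;
  trans : nat -> St -> (nat -> option Msg) -> St;
  out : nat -> St -> option bool
}.
Arguments init a _ : clear implicits.
Arguments send a _ _ : clear implicits.
Arguments trans a _ _ _ : clear implicits.
Arguments out a _ _ : clear implicits.

(* Communication graphs: G r is the (simple directed) graph of round r >= 1;
   (G r p q) means q receives p's round-r message. *)

Fixpoint state (A : algorithm) (n : nat) (ident : 'I_n -> nat)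
    (G : nat -> rel 'I_n) (r : nat) : 'I_n -> St A :=
  match r with
  | 0 => fun p => init A (ident p)
  | r'.+1 =>
      let prev := state A ident G r' in
      fun q => trans A (ident q) (prev q)
        (fun x => match [pick p | (ident p == x) && G r'.+1 p q] with
                  | Some p => Some (send A (ident p) (prev p))
                  | None => None
                  end)
  end.

Definition solves_run (A : algorithm) (n : nat) (ident : 'I_n -> nat)
    (G : nat -> rel 'I_n) : Prop :=
  let st := state A ident G in
  (forall (q : 'I_n) r b, out A (ident q) (st r q) = Some b ->
      forall r', r <= r' -> out A (ident q) (st r' q) = Some b) /\
  (exists p : 'I_n, forall q : 'I_n, exists r, out A (ident q) (st r q) = Some (q == p)).

Definition influences (n : nat) (G : nat -> rel 'I_n) (t : nat) (p q : 'I_n) : bool :=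
  (p == q) || G t p q.

Fixpoint chainb (n : nat) (G : nat -> rel 'I_n) (k t : nat) (p q : 'I_n) : bool :=
  match k with
  | 0 => p == q
  | k'.+1 => [exists p' : 'I_n, influences G t p p' && chainb G k' t.+1 p' q]
  end.

(* d_t(p,q): least k >= 1 with a causal chain of length k; None = infinity *)
Definition dist (n : nat) (G : nat -> rel 'I_n) (t : nat) (p q : 'I_n) : option nat :=
  match excluded_middle_informative (exists k, (0 < k) && chainb G k t p q) with
  | left h => Some (@ex_minn (fun k => (0 < k) && chainb G k t p q) h)
  | right _ => None
  end.

(* maximum on extended naturals (None = infinity) *)
Definition omax (a b : option nat) : option nat :=
  match a, b with Some x, Some y => Some (maxn x y) | _, _ => None end.

Definition is_rootb (n : nat) (G : nat -> rel 'I_n) (t : nat) (R : {set 'I_n}) : bool :=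
  [&& R != set0,
      [forall p in R, forall q in R, connect (G t) p q],
      [forall p in R, forall q, (connect (G t) p q && connect (G t) q p) ==> (q \in R)] &
      [forall p in R, forall q, (q \notin R) ==> ~~ G t q p]].

(* the root component R^t (unique under Assumption 1) *)
Definition rootcomp (n : nat) (G : nat -> rel 'I_n) (t : nat) : option {set 'I_n} :=
  [pick R : {set 'I_n} | is_rootb G t R].

Definition netdiam (n : nat) (G : nat -> rel 'I_n) (x : nat) : option nat :=
  match rootcomp G x with
  | Some R => \big[omax/Some 0]_(p in R) \big[omax/Some 0]_(q : 'I_n) dist G x p q
  | None => None
  end.

Definition intdiam (n : nat) (G : nat -> rel 'I_n) (r s : nat) : option nat :=
  let xs := [seq x <- iota r (s.+1 - r) |
               if netdiam G x is Some m then x + m - 1 <= s else false] in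
  if xs is [::] then None else Some (\max_(x <- xs) odflt 0 (netdiam G x)).

Definition vstable (n : nat) (G : nat -> rel 'I_n) (r s : nat) (R : {set 'I_n}) : Prop :=
  forall t, r <= t <= s -> is_rootb G t R.

Definition Dbounded (n : nat) (G : nat -> rel 'I_n) (D r s : nat) : Prop :=
  (if intdiam G r s is Some m then m <= D else False) /\
  (if netdiam G (s.+1 - D) is Some m then m <= D else False).

Definition Assumption1 (n : nat) (G : nat -> rel 'I_n) (D : nat) : Prop :=
  (forall t, 1 <= t -> exists! R : {set 'I_n}, is_rootb G t R) /\
  (forall r s (R : {set 'I_n}), 1 <= r -> r <= s -> D <= s.+1 - r ->
      vstable G r s R -> Dbounded G D r s) /\
  (exists rST d (R : {set 'I_n}), [/\ 1 <= rST, 4 * D < d,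
      vstable G rST (rST + d) R & Dbounded G D rST (rST + d)]).

(* Main.v *)
Require Import Defs.
From Stdlib Require Import ClassicalEpsilon.
From mathcomp Require Import all_boot zify.
Set Implicit Arguments. Unset Strict Implicit. Unset Printing Implicit Defensive.
From Stdlib Require Import FunctionalExtensionality.
Lemma sim (A : algorithm) n1 n2 (id1 : 'I_n1 -> nat) (id2 : 'I_n2 -> nat)
  (G1 : nat -> rel 'I_n1) (G2 : nat -> rel 'I_n2) (f : 'I_n1 -> 'I_n2)
  (P : nat -> 'I_n1 -> Prop) :
  injective id1 -> (forall u, id2 (f u) = id1 u) ->
  (forall k u, P k.+1 u -> P k u /\
     (forall v, G1 k.+1 v u -> P k v /\ G2 k.+1 (f v) (f u)) /\
     (forall w, G2 k.+1 w (f u) -> exists v, w = f v /\ G1 k.+1 v u)) ->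
  forall k u, P k u -> state A id1 G1 k u = state A id2 G2 k (f u).
Proof.
move=> inj1 hid hP; elim=> [|k IH] u Pu /=; first by rewrite hid.
have [Pk [hin hout]] := hP k u Pu.
rewrite hid IH //; congr (trans _ _ _ _).
apply: functional_extensionality => x.
case: pickP => [v /andP[/eqP idv Gv]|none].
  have [Pv G2v] := hin v Gv.
  case: pickP => [w /andP[/eqP idw Gw]|none2].
    have [v' [ew G1v']] := hout w Gw; subst w.
    have ev : v' = v by apply: inj1; rewrite -hid idw idv.
    by subst v'; rewrite IH // hid.
  by move: (none2 (f v)); rewrite hid idv eqxx G2v.
case: pickP => [w /andP[/eqP idw Gw]|//].
have [v' [ew G1v']] := hout w Gw; subst w.
by move: (none v'); rewrite -hid idw eqxx G1v'.
Qed.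

Lemma two_true (A : algorithm) n (id : 'I_n -> nat) G u w r r' :
  solves_run A id G -> out A (id u) (state A id G r u) = Some true ->
  out A (id w) (state A id G r' w) = Some true -> u = w.
Proof.
move=> [irr [L hL]] hu hw.
have [r1 h1] := hL u; have [r2 h2] := hL w.
have e1 := irr _ _ _ hu (maxn r r1) (leq_maxl _ _).
have e1' := irr _ _ _ h1 (maxn r r1) (leq_maxr _ _).
have e2 := irr _ _ _ hw (maxn r' r2) (leq_maxl _ _).
have e2' := irr _ _ _ h2 (maxn r' r2) (leq_maxr _ _).
rewrite e1 in e1'; rewrite e2 in e2'.
case: e1' => /esym/eqP ->; by case: e2' => /esym/eqP ->.
Qed.
Lemma closed_conn n (e : rel 'I_n) (S : {set 'I_n}) :
  (forall p q, p \in S -> q \notin S -> ~~ e q p) ->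
  forall p q, p \in S -> connect e q p -> q \in S.
Proof.
move=> cl p q pS /connectP [s pth ep]; rewrite ep in pS; clear ep.
elim: s q pth pS => [//|y s IH] q /= /andP[eqy pth] lS.
have yS := IH _ pth lS.
apply/negPn/negP => qS; by move: (cl _ _ yS qS); rewrite eqy.
Qed.

Lemma rootP n (G : nat -> rel 'I_n) t S :
  reflect [/\ S != set0, (forall p q, p \in S -> q \in S -> connect (G t) p q),
     (forall p q, p \in S -> connect (G t) p q -> connect (G t) q p -> q \in S) &
     (forall p q, p \in S -> q \notin S -> ~~ G t q p)] (is_rootb G t S).
Proof.
apply: (iffP and4P) => [[h1 /forallP h2 /forallP h3 /forallP h4]|[h1 h2 h3 h4]]; split=> //.
- move=> p q pS qS; move: (h2 p); rewrite pS /= => /forallP/(_ q); by rewrite qS.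
- move=> p q pS c1 c2; move: (h3 p); rewrite pS /= => /forallP/(_ q); by rewrite c1 c2.
- move=> p q pS qS; move: (h4 p); rewrite pS /= => /forallP/(_ q); by rewrite qS.
- apply/forallP => p; apply/implyP => pS; apply/forallP => q; apply/implyP => qS; exact: h2.
- apply/forallP => p; apply/implyP => pS; apply/forallP => q; apply/implyP => /andP[c1 c2]; exact: h3 c1 c2.
- apply/forallP => p; apply/implyP => pS; apply/forallP => q; apply/implyP => qS; exact: h4.
Qed.

Lemma unique_root n (G : nat -> rel 'I_n) t S s T :
  is_rootb G t S -> s \in S -> (forall v, connect (G t) s v) -> is_rootb G t T -> T = S.
Proof.
move=> /rootP[_ S2 S3 S4] sS reach /rootP[T1 T2 T3 T4].
have [y yT] := set0Pn _ T1.
have sT : s \in T by apply: (closed_conn T4 yT (reach y)).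
apply/setP => x; apply/idP/idP => hx.
- apply: (S3 s x sS (T2 _ _ sT hx) (T2 _ _ hx sT)).
- apply: (T3 s x sT (reach x) (S2 _ _ hx sS)).
Qed.

Lemma clique_root n (G : nat -> rel 'I_n) t u v :
  u != v -> G t u v -> G t v u ->
  (forall y, y != u -> y != v -> ~~ G t y u && ~~ G t y v) -> is_rootb G t [set u; v].
Proof.
move=> uv Guv Gvu cl.
have cl' : forall p q, p \in [set u; v] -> q \notin [set u; v] -> ~~ G t q p.
  move=> p q; rewrite !inE => /orP[]/eqP -> /norP[qu qv]; by have /andP[] := cl q qu qv.
apply/rootP; split=> //.
- by apply/set0Pn; exists u; rewrite !inE eqxx.
- move=> p q; rewrite !inE => /orP[]/eqP -> /orP[]/eqP ->; rewrite ?connect0 //;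
  by apply: connect1.
- move=> p q pS _ c2. exact: (closed_conn cl' pS c2).
Qed.

Definition hubn (c d x y : nat) : bool := ((x == c) && (y != c)) || ((x == d) && (y == c)).
Definition hubr N c d : rel 'I_N := fun u v => hubn c d (val u) (val v).

Lemma dist_le n (G : nat -> rel 'I_n) t p q k B :
  0 < k -> k <= B -> chainb G k t p q -> exists m, dist G t p q = Some m /\ m <= B.
Proof.
move=> k0 kB ch; rewrite /dist; case: excluded_middle_informative => [h|h].
  case: ex_minnP => m _ hm; exists m; split=> //; apply: leq_trans kB; apply: hm; by rewrite k0 ch.
by exfalso; apply: h; exists k; rewrite k0 ch.
Qed.

Lemma omax_bound (I : Type) (r : seq I) (P : pred I) (F : I -> option nat) B :
  (forall i, P i -> exists m, F i = Some m /\ m <= B) ->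
  exists m, \big[omax/Some 0]_(i <- r | P i) F i = Some m /\ m <= B.
Proof.
move=> hF; apply: (big_ind (fun o => exists m, o = Some m /\ m <= B)) => //.
  by exists 0.
move=> x y [a [-> ha]] [b [-> hb]]; exists (maxn a b); split=> //.
by rewrite geq_max ha hb.
Qed.

Section Gen.
Variables (N : nat) (G : nat -> rel 'I_N) (R c d : nat) (hc : c < N) (hd : d < N).
Variable (X : nat -> {set 'I_N}).
Hypothesis cd : c != d.
Hypothesis Ghub : forall t, R < t -> G t = hubr c d.
Hypothesis Gpre : forall t, 0 < t <= R ->
  [/\ is_rootb G t (X t), exists2 s, s \in X t & (forall v, connect (G t) s v) &
      X t != [set Ordinal hc; Ordinal hd]].

Let cc := Ordinal hc.
Let dd := Ordinal hd.
Let Sc := [set cc; dd].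

Lemma hub_reach t : R < t -> forall v, connect (G t) cc v.
Proof.
move=> Rt v; rewrite Ghub //; case: (eqVneq v cc) => [->|vc]; first exact: connect0.
apply: connect1; rewrite /hubr /hubn /= eqxx /=.
apply/orP; left; apply: contra vc => /eqP h; apply/eqP; exact: val_inj.
Qed.

Lemma hub_root t : R < t -> is_rootb G t Sc.
Proof.
move=> Rt; apply: clique_root; rewrite ?Ghub // /hubr /hubn /=.
- by rewrite eqxx eq_sym cd.
- by rewrite !eqxx orbT.
move=> y yc yd.
have yc' : val y != c by apply: contra yc => /eqP h; apply/eqP; exact: val_inj.
have yd' : val y != d by apply: contra yd => /eqP h; apply/eqP; exact: val_inj.
by rewrite (negbTE yc') (negbTE yd').
Qed.

Lemma hub_unique t T : R < t -> is_rootb G t T -> T = Sc.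
Proof.
move=> Rt hT; apply: (unique_root (hub_root Rt) _ (hub_reach Rt) hT).
by rewrite !inE eqxx.
Qed.

Lemma hub_edge t q : R < t -> q != cc -> G t cc q.
Proof.
move=> Rt qc; rewrite Ghub // /hubr /hubn /= eqxx /=.
have qc' : val q != c by apply: contra qc => /eqP h; apply/eqP; exact: val_inj.
by rewrite qc'.
Qed.

Lemma hub_edge2 t : R < t -> G t dd cc.
Proof. move=> Rt; rewrite Ghub // /hubr /hubn /= !eqxx. by rewrite orbT. Qed.

Lemma hub_inf t q : R < t -> influences G t cc q.
Proof.
move=> Rt; rewrite /influences; case: (eqVneq cc q) => [//|cq].
by rewrite hub_edge // eq_sym.
Qed.

Lemma hub_dist t p q : R < t -> p \in Sc -> exists m, dist G t p q = Some m /\ m <= 2.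
Proof.
move=> Rt; rewrite !inE => /orP[]/eqP ->.
  apply: (@dist_le _ _ _ _ _ 1 2) => //.
  rewrite [chainb _ _ _ _ _]/=; apply/existsP; exists q; rewrite eqxx andbT.
  exact: hub_inf.
apply: (@dist_le _ _ _ _ _ 2 2) => //.
rewrite [chainb _ _ _ _ _]/=; apply/existsP; exists cc.
rewrite /influences hub_edge2 // orbT /=.
apply/existsP; exists q; rewrite eqxx andbT; apply: hub_inf; exact: ltnW.
Qed.

Lemma hub_netdiam t : R < t -> exists m, netdiam G t = Some m /\ m <= 2.
Proof.
move=> Rt; rewrite /netdiam /rootcomp; case: pickP => [T hT|none].
  rewrite (hub_unique Rt hT); apply: omax_bound => p pS.
  apply: omax_bound => q _; exact: hub_dist.
by move: (none Sc); rewrite hub_root.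
Qed.

Lemma hub_Dbounded r s : R < r -> R.+2 <= s.+1 - r -> Dbounded G R.+2 r s.
Proof.
move=> Rr len; split.
  rewrite /intdiam.
  set xs := [seq x <- _ | _].
  have rin : r \in xs.
    rewrite mem_filter mem_iota leqnn /=.
    have [m [-> hm]] := hub_netdiam Rr.
    apply/andP; split; lia.
  have hb : \max_(x <- xs) odflt 0 (netdiam G x) <= 2.
    rewrite big_seq; apply: (big_ind (fun m => m <= 2)) => //.
      by move=> a b ha hb; rewrite geq_max ha hb.
    move=> x; rewrite mem_filter mem_iota => /andP[_ /andP[hx _]].
    by have [m [-> hm]] := hub_netdiam (leq_trans Rr hx).
  case: xs rin hb => [//|x0 xs'] _ hb; lia.
have [m [-> hm]] : exists m, netdiam G (s.+1 - R.+2) = Some m /\ m <= 2.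
  apply: hub_netdiam; lia.
lia.
Qed.

Lemma gen_assump : Assumption1 G R.+2.
Proof.
split; last split.
- move=> t t1; case: (leqP t R) => tR.
    have [h1 [s sX reach] _] : _ := Gpre (t:=t) ltac:(by rewrite t1 tR).
    exists (X t); split=> // T hT; exact: esym (unique_root h1 sX reach hT).
  exists Sc; split; first exact: hub_root.
  move=> T hT; exact: esym (hub_unique tR hT).
- move=> r s S r1 rs len hv.
  have Rr : R < r.
    rewrite ltnNge; apply/negP => rR.
    have [h1 [s0 sX reach] hne] : _ := Gpre (t:=r) ltac:(by rewrite r1 rR).
    have e1 := unique_root h1 sX reach (hv r ltac:(by rewrite leqnn rs)).
    have sR : R < s by lia.
    have e2 := hub_unique sR (hv s ltac:(by rewrite leqnn rs)).
    by move: hne; rewrite -e1 e2 eqxx.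
  exact: hub_Dbounded.
- exists R.+1, (4 * R.+2).+1, Sc; split=> //.
  + move=> t /andP[h1 _]; exact: hub_root.
  + apply: hub_Dbounded => //; lia.
Qed.
End Gen.
Definition piN t x y := let a := t.*2 + 4 in ((x == a) && (y != a)) || ((x == a.+1) && (y == a)).
Definition betaN e s t x y := let a := t.*2 + 4 in let b := a.+1 in
   ((x == e) && (y == e.+1)) || ((x == e.+1) && (y == e)) ||
   (if s == t then ((x == e) && (y == b)) || ((x == b) && (y == a)) ||
                   [&& x == a, y != e, y != e.+1, y != a & y != b]
    else ((x == e) && (y == a)) || [&& x == a, y != e, y != e.+1 & y != a]).

Definition good e s k y : Prop := y != e /\ y != e.+1 /\
  (forall t, 0 < t -> t <= k -> t != s -> y != t.*2 + 4) /\ ~~ [&& y == s.*2 + 5, 0 < s & s <= k].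

Lemma good_mono e s k y : good e s k.+1 y -> good e s k y.
Proof.
move=> [h1 [h2 [h3 h4]]]; split=> //; split=> //; split.
  move=> t t0 tk ts; apply: h3 => //; lia.
lia.
Qed.

Lemma rel_pre e s k x y : (e = 0 \/ e = 2) -> good e s k.+1 y ->
  (piN k.+1 x y -> good e s k x) /\ piN k.+1 x y = betaN e s k.+1 x y.
Proof.
move=> he [h1 [h2 [h3 h4]]].
have h5 := h3 k.+1 isT (leqnn _).
rewrite /piN /betaN; case: (s =P k.+1) => es.
  subst s. split; last by lia.
  move=> hp; split; first by lia. split; first by lia. split; last by lia.
  move=> t t0 tk ts; lia.
have {}h5 : y != k.+1.*2 + 4 by apply: h5; apply/eqP => e'; apply: es; rewrite e'.
split; last by lia.
move=> hp; split; first by lia. split; first by lia. split; last by lia.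
move=> t t0 tk ts; lia.
Qed.

Definition mkG N R c d (pre : nat -> nat -> nat -> bool) : nat -> rel 'I_N :=
  fun t u v => if (0 < t <= R) then pre t (val u) (val v) else hubn c d (val u) (val v).
Arguments mkG : clear implicits.

Lemma mkG_hub N R c d pre t : R < t -> mkG N R c d pre t = hubr c d.
Proof. move=> Rt; rewrite /mkG. have -> : (0 < t <= R) = false by lia. by []. Qed.

Lemma mkG_pre N R c d pre t u v : 0 < t <= R -> mkG N R c d pre t u v = pre t (val u) (val v).
Proof. by rewrite /mkG => ->. Qed.

Definition NN R := (R.*2 + 5).+1.
Definition GPi R := mkG (NN R) R 4 5 piN.
Definition GBe R e s := mkG (NN R) R 4 5 (betaN e s).
Arguments GPi : clear implicits.
Arguments GBe : clear implicits.

Lemma inK R k : k < NN R -> val (inord k : 'I_(NN R)) = k.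
Proof. exact: inordK. Qed.

Lemma neq_in R (y : 'I_(NN R)) k : k < NN R -> (y != inord k) = (val y != k).
Proof. move=> hk; by rewrite -val_eqE /= inK. Qed.

Lemma irr_Pi R t : irreflexive (GPi R t).
Proof.
move=> u; rewrite /GPi /mkG; case: (0 < t <= R); rewrite /piN /hubn; lia.
Qed.

Lemma irr_Be R e s t : e <= 2 -> irreflexive (GBe R e s t).
Proof.
move=> he u; rewrite /GBe /mkG; case: (boolP (0 < t <= R)) => ht; rewrite /betaN /hubn /=; last by lia.
case: (s == t); lia.
Qed.

Lemma four R : 4 < NN R. Proof. rewrite /NN; lia. Qed.
Lemma five R : 5 < NN R. Proof. rewrite /NN; lia. Qed.

Lemma assum_Pi R : Assumption1 (GPi R) R.+2.
Proof.
apply: (@gen_assump _ _ R 4 5 (four R) (five R) (fun t => [set inord (t.*2+4); inord (t.*2+5)])) => //.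
  move=> t Rt; exact: mkG_hub.
move=> t /andP[t0 tR].
have ha : t.*2 + 4 < NN R by rewrite /NN; lia.
have hb : t.*2 + 5 < NN R by rewrite /NN; lia.
have E : forall u v, GPi R t u v = piN t (val u) (val v) by move=> u v; rewrite /GPi mkG_pre ?t0.
split.
- apply: clique_root.
  + by rewrite neq_in // inK //; lia.
  + by rewrite E !inK // /piN; lia.
  + by rewrite E !inK // /piN; lia.
  + move=> y; rewrite !neq_in // => ya yb; rewrite !E !inK // /piN; lia.
- exists (inord (t.*2+4)); first by rewrite !inE eqxx.
  move=> v; case: (eqVneq v (inord (t.*2+4))) => [->|va]; first exact: connect0.
  apply: connect1; rewrite E inK //; move: va; rewrite neq_in // /piN; lia.
- apply/negP => /eqP e; have := congr1 (fun S : {set _} => inord (t.*2 + 4) \in S) e.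
  rewrite /= !inE -!val_eqE /= !inK //; lia.
Qed.

Lemma assum_Be R e s : e <= 2 -> Assumption1 (GBe R e s) R.+2.
Proof.
move=> he.
apply: (@gen_assump _ _ R 4 5 (four R) (five R) (fun t => [set inord e; inord e.+1])) => //.
  move=> t Rt; exact: mkG_hub.
move=> t /andP[t0 tR].
have ha : t.*2 + 4 < NN R by rewrite /NN; lia.
have hb : t.*2 + 5 < NN R by rewrite /NN; lia.
have hE : e < NN R by rewrite /NN; lia.
have hE1 : e.+1 < NN R by rewrite /NN; lia.
have E : forall u v, GBe R e s t u v = betaN e s t (val u) (val v) by move=> u v; rewrite /GBe mkG_pre ?t0.
set oe := (inord e : 'I_(NN R)).
set oa := (inord (t.*2+4) : 'I_(NN R)).
set ob := (inord (t.*2+5) : 'I_(NN R)).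
have toval : forall (v : 'I_(NN R)) k, k < NN R -> val v = k -> v = inord k.
  by move=> v k hk h; apply: val_inj; rewrite /= inK.
case st: (s == t).
- have E' : forall u v, GBe R e s t u v = [|| (val u == e) && (val v == e.+1), (val u == e.+1) && (val v == e),
     (val u == e) && (val v == t.*2+5), (val u == t.*2+5) && (val v == t.*2+4) |
     [&& val u == t.*2+4, val v != e, val v != e.+1, val v != t.*2+4 & val v != t.*2+5]].
    move=> u v; rewrite E /betaN st /=; lia.
  split.
  + apply: clique_root.
    * by rewrite neq_in // inK //; lia.
    * by rewrite E' !inK //; lia.
    * by rewrite E' !inK //; lia.
    * move=> y; rewrite !neq_in // => ya yb; rewrite !E' !inK //; lia.
  + exists oe; first by rewrite !inE eqxx.
    move=> v; case: (eqVneq v oe) => [->|]; first exact: connect0.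
    rewrite neq_in // => ve.
    case: (eqVneq (val v) e.+1) => [h|h1].
      by apply: connect1; rewrite E' inK // h; lia.
    apply: (@connect_trans _ _ ob); first by apply: connect1; rewrite E' !inK //; lia.
    case: (eqVneq (val v) (t.*2+5)) => [h|h2].
      by rewrite (toval v _ hb h); exact: connect0.
    apply: (@connect_trans _ _ oa); first by apply: connect1; rewrite E' !inK //; lia.
    case: (eqVneq (val v) (t.*2+4)) => [h|h3].
      by rewrite (toval v _ ha h); exact: connect0.
    apply: connect1; rewrite E' !inK //. move: ve h1 h2 h3; set x := val v; lia.
  + apply/negP => /eqP eq; have := congr1 (fun S : {set _} => oe \in S) eq.
    rewrite /= !inE -!val_eqE /= !inK //; lia.
- have E' : forall u v, GBe R e s t u v = [|| (val u == e) && (val v == e.+1), (val u == e.+1) && (val v == e),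
     (val u == e) && (val v == t.*2+4) |
     [&& val u == t.*2+4, val v != e, val v != e.+1 & val v != t.*2+4]].
    move=> u v; rewrite E /betaN st /=; lia.
  split.
  + apply: clique_root.
    * by rewrite neq_in // inK //; lia.
    * by rewrite E' !inK //; lia.
    * by rewrite E' !inK //; lia.
    * move=> y; rewrite !neq_in // => ya yb; rewrite !E' !inK //; lia.
  + exists oe; first by rewrite !inE eqxx.
    move=> v; case: (eqVneq v oe) => [->|]; first exact: connect0.
    rewrite neq_in // => ve.
    case: (eqVneq (val v) e.+1) => [h|h1].
      by apply: connect1; rewrite E' inK // h; lia.
    apply: (@connect_trans _ _ oa); first by apply: connect1; rewrite E' !inK //; lia.
    case: (eqVneq (val v) (t.*2+4)) => [h|h3].
      by rewrite (toval v _ ha h); exact: connect0.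
    apply: connect1; rewrite E' !inK //; move: ve h1 h3; set x := val v; lia.
  + apply/negP => /eqP eq; have := congr1 (fun S : {set _} => oe \in S) eq.
    rewrite /= !inE -!val_eqE /= !inK //; lia.
Qed.

Definition Galpha := mkG 2 0 0 1 (fun _ _ _ => false).
Definition identA (e : nat) : 'I_2 -> nat := fun i => val i + e.

Lemma irr_alpha t : irreflexive (Galpha t).
Proof. move=> u; rewrite /Galpha /mkG; case: (0 < t <= 0); rewrite /hubn; lia. Qed.

Lemma assum_alpha : Assumption1 Galpha 2.
Proof.
apply: (@gen_assump 2 Galpha 0 0 1 isT isT (fun _ => set0)) => //.
  move=> t Rt; exact: mkG_hub.
move=> t; lia.
Qed.

Lemma identA_inj e : injective (identA e).
Proof. move=> x y /addIn; exact: val_inj. Qed.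

Lemma alpha_beta A R e s r (L : 'I_2) : e <= 2 -> r <= R ->
  state A (identA e) Galpha r L = state A val (GBe R e s) r (inord (val L + e)).
Proof.
move=> he hr.
have hin : forall u : 'I_2, val u + e < NN R by move=> [u hu]; rewrite /NN /=; lia.
apply: (@sim A _ _ _ _ _ _ (fun u => inord (val u + e)) (fun k _ => k <= R)) => //.
- exact: identA_inj.
- by move=> u; rewrite inK.
move=> k u hk; split; first lia.
have hk0 : 0 < k.+1 <= R by lia.
split.
- move=> v; rewrite /Galpha mkG_hub // /hubr => hv; split; first lia.
  rewrite /GBe mkG_pre // !inK // /betaN.
  case: u hv => [[|[|//]] hu] /=; case: v => [[|[|//]] hv] //= _; case: (s == k.+1); lia.
- move=> w; rewrite /GBe mkG_pre // inK // /betaN => hw.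
  case: u hw => [[|[|//]] hu] /= hw.
  + exists (Ordinal (isT : 1 < 2)); split.
      apply/eqP; rewrite -val_eqE /= inK //=; move: hw; set x := val w; clearbody x; rewrite /NN; case: (s == k.+1); clear -he; lia.
    by rewrite /Galpha /mkG.
  + exists (Ordinal (isT : 0 < 2)); split.
      apply/eqP; rewrite -val_eqE /= inK //=; move: hw; set x := val w; clearbody x; rewrite /NN; case: (s == k.+1); clear -he; lia.
    by rewrite /Galpha /mkG.
Qed.

Lemma hub_good e s k x y : (e = 0 \/ e = 2) -> hubn 4 5 x y -> good e s k x.
Proof.
rewrite /hubn => he hx; split; first lia. split; first lia. split; last lia.
move=> t t0 _ _; lia.
Qed.

Lemma pi_beta A R e s k (w : 'I_(NN R)) : (e = 0 \/ e = 2) ->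
  (forall k, good e s k (val w)) -> state A val (GPi R) k w = state A val (GBe R e s) k w.
Proof.
move=> he hg.
apply: (@sim A _ _ _ _ _ _ id (fun k u => good e s k (val u))) => //.
- exact: val_inj.
move=> {}k u hu; split; first exact: good_mono.
case: (leqP k.+1 R) => hkR.
- have hk0 : 0 < k.+1 <= R by rewrite hkR.
  rewrite /GPi /GBe; split.
  + move=> v; rewrite !mkG_pre // => hv.
    have [h1 h2] := rel_pre (val v) he hu.
    by split; [exact: h1 | rewrite -h2].
  + move=> w'; rewrite !mkG_pre // => hw; exists w'; split=> //.
    have [_ h2] := rel_pre (val w') he hu; by rewrite mkG_pre // h2.
- rewrite /GPi /GBe !mkG_hub //; split.
  + move=> v hv; split=> //; exact: hub_good hv.
  + move=> w' hw; by exists w'.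
Qed.

Lemma leader_true A n (id : 'I_n -> nat) G : solves_run A id G ->
  exists L r, out A (id L) (state A id G r L) = Some true.
Proof. move=> [_ [L hL]]; have [r hr] := hL L; exists L, r; by rewrite eqxx in hr. Qed.

Theorem theorem4 :
  forall A : algorithm,
    ~ (forall (n : nat), 2 <= n ->
       forall ident : 'I_n -> nat, injective ident ->
       forall G : nat -> rel 'I_n, (forall t, irreflexive (G t)) ->
       forall D : nat, 0 < D -> Assumption1 G D ->
       solves_run A ident G).
Proof.
move=> A H.
have sa : forall e, solves_run A (identA e) Galpha.
  move=> e; exact: (H 2 isT (identA e) (@identA_inj e) Galpha irr_alpha 2 isT assum_alpha).
have [L0 [r0 h0]] := leader_true (sa 0).
have [L2 [r2 h2]] := leader_true (sa 2).
set R := maxn r0 r2.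
have hN : 1 < NN R by rewrite /NN; lia.
have sP := H (NN R) hN val val_inj (GPi R) (@irr_Pi R) R.+2 isT (@assum_Pi R).
have sB : forall e s, e <= 2 -> solves_run A val (GBe R e s).
  move=> e s he; exact: (H (NN R) hN val val_inj (GBe R e s) (fun t => @irr_Be R e s t he) R.+2 isT (@assum_Be R e s he)).
have [L [r hL]] := leader_true sP.
have key : forall e s, (e = 0 \/ e = 2) -> (forall k, good e s k (val L)) -> False.
  move=> e s he hg.
  have he2 : e <= 2 by case: he => ->.
  have [Le [re [hre hout]]] : exists Le re, re <= R /\
      out A (identA e Le) (state A (identA e) Galpha re Le) = Some true.
    case: he => ->; [exists L0, r0 | exists L2, r2]; split=> //; rewrite /R; lia.
  have e1 := alpha_beta A s Le he2 hre.
  have e2 := pi_beta A r he hg.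
  have hle : val Le < 2 := ltn_ord Le.
  have hin : val Le + e < NN R by rewrite /NN; lia.
  have t1 : out A (val (inord (val Le + e) : 'I_(NN R)))
             (state A val (GBe R e s) re (inord (val Le + e))) = Some true.
    by rewrite -e1 inK.
  have t2 : out A (val L) (state A val (GBe R e s) r L) = Some true by rewrite -e2.
  have eq := two_true (sB e s he2) t1 t2.
  have [g1 [g2 _]] := hg 0.
  move: (congr1 val eq); rewrite inK // => hv.
  move: g1 g2 hle; rewrite -hv; lia.
have hdh := odd_double_half (val L).
case: (ltnP (val L) 2) => h.
  apply: (key 2 0); first by right.
  move=> k; split; first lia. split; first lia. split; last lia.
  move=> t t0 tk ts; lia.
case: (boolP ((val L < 6) || odd (val L))) => h'.
  apply: (key 0 0); first by left.
  move=> k; split; first lia. split; first lia. split; last lia.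
  move=> t t0 tk ts; case/orP: h' => [h6|ho]; first lia.
  rewrite ho in hdh; lia.
have [h6 ho] : 6 <= val L /\ odd (val L) = false by move: h'; case: (odd (val L)); lia.
rewrite ho in hdh.
apply: (key 0 ((val L)./2 - 2)); first by left.
move=> k; split; first lia. split; first lia. split; last lia.
move=> t t0 tk ts; lia.
Qed.
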